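(* (1-cut in MRL.) For every sequent $\Gamma$ and every formula $A$ of MRL: if $\Gamma, \emptyset{:}A$ is derivable in MRL, then $\Gamma$ is derivable in MRL.
   Context: Fix a nonempty set $\mathcal{R}$ (the set of roles). For $R\subseteq\mathcal{R}$ write $\overline{R}=\mathcal{R}\setminus R$. An ultrafilter $\mathcal{U}$ on $\mathcal{R}$ is a set of subsets of $\mathcal{R}$ such that $\mathcal{R}\in\mathcal{U}$; $R_1\in\mathcal{U}$ and $R_1\subseteq R_2$ imply $R_2\in\mathcal{U}$; $R_1,R_2\in\mathcal{U}$ imply $R_1\cap R_2\in\mathcal{U}$; and for every $R\subseteq\mathcal{R}$, $R\in\mathcal{U}$ or $\overline{R}\in\mathcal{U}$. An endomorphism is any function $f:\mathcal{R}\to\mathcal{R}$, and $f^{-1}(R)$ denotes the preimage of $R$. Fix a first-order language of terms $t$ with variables $x$, and a collection of primitive (atomic) formulas $a$ (which may contain terms). Formulas of MRL: $A ::= a \mid \neg_f(A) \mid A_1\wedge_{\mathcal{U}} A_2 \mid A\supset_{f,\mathcal{U}} B \mid \forall_{\mathcal{U}}(\lambda x.A)$, with $f$ an endomorphism and $\mathcal{U}$ an ultrafilter on $\mathcal{R}$; $x$ is bound in $\forall_{\mathcal{U}}(\lambda x.A)$, and $A[t/x]$ is capture-avoiding substitution. An i-formula is a pair $R{:}A$ with $R\subseteq\mathcal{R}$ and $A$ a formula; a sequent is a finite multiset of i-formulas, and comma denotes multiset union. Derivability in MRL is given by the rules (premises $\Rightarrow$ conclusion, $\Gamma,\Gamma_1,\Gamma_2$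 arbitrary sequents): (Id) $\Gamma, R_1{:}a,\ldots,R_n{:}a$ is derivable whenever $n\ge1$ and $R_1,\ldots,R_n$ are pairwise disjoint with union $\mathcal{R}$; (Weaken) $\Gamma,R{:}A,R{:}A \Rightarrow \Gamma,R{:}A$; ($\neg$) $\Gamma, f^{-1}(R){:}A \Rightarrow \Gamma, R{:}\neg_f(A)$; ($\wedge$-neg-l) if $R\notin\mathcal{U}$: $\Gamma,R{:}A\Rightarrow\Gamma,R{:}A\wedge_{\mathcal{U}}B$; ($\wedge$-neg-r) if $R\notin\mathcal{U}$: $\Gamma,R{:}B\Rightarrow\Gamma,R{:}A\wedge_{\mathcal{U}}B$; ($\wedge$-pos) if $R\in\mathcal{U}$: $(\Gamma,R{:}A;\ \Gamma,R{:}B)\Rightarrow\Gamma,R{:}A\wedge_{\mathcal{U}}B$; ($\supset$-neg) if $R\notin\mathcal{U}$: $\Gamma,f^{-1}(R){:}A,R{:}B\Rightarrow\Gamma,R{:}A\supset_{f,\mathcal{U}}B$; ($\supset$-pos) if $R\in\mathcal{U}$: $(\Gamma_1,f^{-1}(R){:}A;\ \Gamma_2,R{:}B)\Rightarrow\Gamma_1,\Gamma_2,R{:}A\supset_{f,\mathcal{U}}B$; ($\forall$-neg) if $R\notin\mathcal{U}$ and $t$ is a term: $\Gamma,R{:}A[t/x]\Rightarrow\Gamma,R{:}\forall_{\mathcal{U}}(\lambda x.A)$; ($\forall$-pos) if $R\in\mathcal{U}$ and $x$ has no free occurrence in $\Gamma$: $\Gamma,R{:}A\Rightarrow\Gamma,R{:}\forall_{\mathcal{U}}(\lambda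 x.A)$. A sequent is derivable in MRL if it is the conclusion of a finite derivation tree built from these rules. *)

(* Defs.v *)
From Stdlib Require Import List Arith Permutation.
Import ListNotations.

Set Implicit Arguments.

Section MRL.

Variables (Role : Type) (Fsym Psym : Type).

Definition rset := Role -> Prop.
Definition rfull : rset := fun _ => True.
Definition rempty : rset := fun _ => False.
Definition rcompl (R : rset) : rset := fun r => ~ R r.
Definition rinter (R1 R2 : rset) : rset := fun r => R1 r /\ R2 r.
Definition rsubset (R1 R2 : rset) : Prop := forall r, R1 r -> R2 r.
Definition preim (f : Role -> Role) (R : rset) : rset := fun r => R (f r).

Record ultrafilter := {
  uf_mem :> rset -> Prop;
  uf_full : uf_mem rfull;
  uf_up : forall R1 R2, uf_mem R1 -> rsubset R1 R2 -> uf_mem R2;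
  uf_inter : forall R1 R2, uf_mem R1 -> uf_mem R2 -> uf_mem (rinter R1 R2);
  uf_ult : forall R, uf_mem R \/ uf_mem (rcompl R)
}.

Inductive term : Type :=
| Var : nat -> term
| App : Fsym -> list term -> term.

Inductive formula : Type :=
| Atom : Psym -> list term -> formula
| Neg : (Role -> Role) -> formula -> formula
| And : ultrafilter -> formula -> formula -> formula
| Imp : (Role -> Role) -> ultrafilter -> formula -> formula -> formula
| All : ultrafilter -> formula -> formula.   (* binds de Bruijn index 0 *)

Fixpoint lift_term (c : nat) (t : term) : term :=
  match t with
  | Var n => Var (if n <? c then n else S n)
  | App f ts => App f (map (lift_term c) ts)
  end.

Fixpoint subst_term (k : nat) (u : term) (t : term) : term :=
  match t with
  | Var n => if n <? k then Var n else if n =? k then u else Var (pred n)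
  | App f ts => App f (map (subst_term k u) ts)
  end.

Fixpoint lift_form (c : nat) (A : formula) : formula :=
  match A with
  | Atom p ts => Atom p (map (lift_term c) ts)
  | Neg f B => Neg f (lift_form c B)
  | And U B C => And U (lift_form c B) (lift_form c C)
  | Imp f U B C => Imp f U (lift_form c B) (lift_form c C)
  | All U B => All U (lift_form (S c) B)
  end.

Fixpoint subst_form (k : nat) (u : term) (A : formula) : formula :=
  match A with
  | Atom p ts => Atom p (map (subst_term k u) ts)
  | Neg f B => Neg f (subst_form k u B)
  | And U B C => And U (subst_form k u B) (subst_form k u C)
  | Imp f U B C => Imp f U (subst_form k u B) (subst_form k u C)
  | All U B => All U (subst_form (S k) (lift_term 0 u) B)
  end.

Definition iformula := (rset * formula)%type.
(* A sequent is a finite multiset of i-formulas: a list up to permutation. *)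
Definition sequent := list iformula.

Definition lift_seq (G : sequent) : sequent :=
  map (fun X => (fst X, lift_form 0 (snd X))) G.

Definition rdisjoint (R1 R2 : rset) : Prop := forall r, R1 r -> R2 r -> False.

Inductive derivable : sequent -> Prop :=
| d_perm : forall G D, Permutation G D -> derivable G -> derivable D
| d_id : forall G p ts (Rs : list rset),
    Rs <> [] ->
    ForallOrdPairs rdisjoint Rs ->
    (forall r, exists R, In R Rs /\ R r) ->
    derivable (map (fun R => (R, Atom p ts)) Rs ++ G)
| d_weaken : forall G R A,
    derivable ((R, A) :: (R, A) :: G) -> derivable ((R, A) :: G)
| d_neg : forall G R f A,
    derivable ((preim f R, A) :: G) -> derivable ((R, Neg f A) :: G)
| d_and_neg_l : forall G R (U : ultrafilter) A B, ~ U R ->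
    derivable ((R, A) :: G) -> derivable ((R, And U A B) :: G)
| d_and_neg_r : forall G R (U : ultrafilter) A B, ~ U R ->
    derivable ((R, B) :: G) -> derivable ((R, And U A B) :: G)
| d_and_pos : forall G R (U : ultrafilter) A B, U R ->
    derivable ((R, A) :: G) -> derivable ((R, B) :: G) ->
    derivable ((R, And U A B) :: G)
| d_imp_neg : forall G R f (U : ultrafilter) A B, ~ U R ->
    derivable ((preim f R, A) :: (R, B) :: G) ->
    derivable ((R, Imp f U A B) :: G)
| d_imp_pos : forall G1 G2 R f (U : ultrafilter) A B, U R ->
    derivable ((preim f R, A) :: G1) -> derivable ((R, B) :: G2) ->
    derivable ((R, Imp f U A B) :: G1 ++ G2)
| d_all_neg : forall G R (U : ultrafilter) A t, ~ U R ->
    derivable ((R, subst_form 0 t A) :: G) ->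
    derivable ((R, All U A) :: G)
| d_all_pos : forall G R (U : ultrafilter) A, U R ->
    (* eigenvariable condition in de Bruijn form: index 0 is fresh for the
       lifted context *)
    derivable ((R, A) :: lift_seq G) ->
    derivable ((R, All U A) :: G).

End MRL.

(* Main.v *)
Require Import Defs.
From Stdlib Require Import List Arith Lia Permutation.
Import ListNotations.

Set Implicit Arguments.

Fixpoint term_ind' {Fsym : Type} (P : term Fsym -> Prop)
  (HV : forall n, P (Var Fsym n))
  (HA : forall f ts, Forall P ts -> P (App f ts)) (t : term Fsym) : P t :=
  match t with
  | Var _ n => HV n
  | App f ts => HA f ts
      ((fix go (l : list (term Fsym)) : Forall P l :=
          match l with
          | [] => Forall_nil _
          | x :: l => Forall_cons _ (@term_ind' Fsym P HV HA x) (go l)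
          end) ts)
  end.

Ltac app_case IH :=
  simpl; f_equal; rewrite ?map_map; apply map_ext_in; intros ? Hin;
  rewrite Forall_forall in IH; apply IH; auto.

Ltac vt := repeat (cbn [lift_term subst_term pred] in *; match goal with
  | |- context [?a <? ?b] => destruct (Nat.ltb_spec a b)
  | |- context [?a =? ?b] => destruct (Nat.eqb_spec a b)
  end); try reflexivity; try (f_equal; lia); try (exfalso; lia).

Lemma lift_lift_term {F : Type} (t : term F) : forall c c', c <= c' ->
  lift_term c (lift_term c' t) = lift_term (S c') (lift_term c t).
Proof.
  induction t as [n|f ts IH] using term_ind'; intros c c' H.
  - vt.
  - simpl; f_equal; rewrite !map_map; apply map_ext_in; intros ? Hin;
    rewrite Forall_forall in IH; apply IH; auto.
Qed.

Lemma subst_lift_same_term {F : Type} (t : term F) : forall c u,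
  subst_term c u (lift_term c t) = t.
Proof.
  induction t as [n|f ts IH] using term_ind'; intros c u.
  - vt.
  - simpl; f_equal; rewrite map_map; rewrite <- (map_id ts) at 2; apply map_ext_in; intros ? Hin;
    rewrite Forall_forall in IH; apply IH; auto.
Qed.

Lemma subst_lift_term {F : Type} (t : term F) : forall c k u, c <= k ->
  subst_term (S k) (lift_term c u) (lift_term c t) = lift_term c (subst_term k u t).
Proof.
  induction t as [n|f ts IH] using term_ind'; intros c k u H.
  - vt.
  - simpl; f_equal; rewrite !map_map; apply map_ext_in; intros ? Hin;
    rewrite Forall_forall in IH; apply IH; auto.
Qed.

Lemma subst_subst_term {F : Type} (X : term F) : forall j k t u, j <= k ->
  subst_term k u (subst_term j t X) =
  subst_term j (subst_term k u t) (subst_term (S k) (lift_term j u) X).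
Proof.
  induction X as [n|f ts IH] using term_ind'; intros j k t u H.
  - simpl.
    destruct (Nat.ltb_spec n j).
    + simpl. destruct (Nat.ltb_spec n k); [|lia]. destruct (Nat.ltb_spec n (S k)); [|lia].
      simpl. destruct (Nat.ltb_spec n j); [reflexivity|lia].
    + destruct (Nat.eqb_spec n j).
      * subst. destruct (Nat.ltb_spec j (S k)); [|lia]. simpl.
        destruct (Nat.ltb_spec j j); [lia|]. rewrite Nat.eqb_refl. reflexivity.
      * simpl. destruct (Nat.ltb_spec n (S k)).
        -- simpl. destruct (Nat.ltb_spec (pred n) k); [|lia].
           destruct (Nat.ltb_spec n j); [lia|]. destruct (Nat.eqb_spec n j); [lia|]. reflexivity.
        -- destruct (Nat.eqb_spec n (S k)).
           ++ subst. simpl. destruct (Nat.ltb_spec k k); [lia|]. rewrite Nat.eqb_refl.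
              rewrite subst_lift_same_term. reflexivity.
           ++ simpl. destruct (Nat.ltb_spec (pred n) k); [lia|].
              destruct (Nat.eqb_spec (pred n) k); [lia|].
              destruct (Nat.ltb_spec (pred n) j); [lia|].
              destruct (Nat.eqb_spec (pred n) j); [lia|]. reflexivity.
  - simpl; f_equal; rewrite !map_map; apply map_ext_in; intros ? Hin;
    rewrite Forall_forall in IH; apply IH; auto.
Qed.

Lemma subst_lift_same_form {R F P : Type} (A : formula R F P) : forall c u,
  subst_form c u (lift_form c A) = A.
Proof.
  induction A as [p ts|g B IHA|U B IHB C IHC|g U B IHB C IHC|U B IHA]; intros; simpl; f_equal; auto.
  rewrite map_map; rewrite <- (map_id ts) at 2; apply map_ext; intros;
  apply subst_lift_same_term.
Qed.

Lemma subst_lift_form {R F P : Type} (A : formula R F P) : forall c k u, c <= k ->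
  subst_form (S k) (lift_term c u) (lift_form c A) = lift_form c (subst_form k u A).
Proof.
  induction A as [p ts|g B IHA|U B IHB C IHC|g U B IHB C IHC|U B IHA]; intros c k u H; simpl; f_equal; auto.
  - rewrite !map_map; apply map_ext; intros; apply subst_lift_term; auto.
  - rewrite lift_lift_term by lia. apply IHA. lia.
Qed.

Lemma subst_subst_form {R F P : Type} (A : formula R F P) : forall j k t u, j <= k ->
  subst_form k u (subst_form j t A) =
  subst_form j (subst_term k u t) (subst_form (S k) (lift_term j u) A).
Proof.
  induction A as [p ts|g B IHA|U B IHB C IHC|g U B IHB C IHC|U B IHA]; intros j k t u H; simpl; f_equal; auto.
  - rewrite !map_map; apply map_ext; intros; apply subst_subst_term; auto.
  - rewrite IHA by lia. rewrite subst_lift_term by lia.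
    rewrite <- lift_lift_term by lia. reflexivity.
Qed.

Definition subst_seq {R F P : Type} k u (G : sequent R F P) : sequent R F P :=
  map (fun X => (fst X, subst_form k u (snd X))) G.

Lemma subst_admissible {R F P : Type} (D : sequent R F P) :
  derivable D -> forall k u, derivable (subst_seq k u D).
Proof.
  induction 1; intros k u; unfold subst_seq in *; simpl in *;
    try rewrite map_app in *.
  - eapply d_perm; [apply Permutation_map; eassumption|auto].
  - rewrite map_map. simpl.
    apply d_id with (ts := map (subst_term k u) ts); auto.
  - apply d_weaken; apply IHderivable.
  - apply d_neg; apply IHderivable.
  - apply d_and_neg_l; auto; try apply IHderivable.
  - apply d_and_neg_r; auto; try apply IHderivable.
  - apply d_and_pos; auto; try apply IHderivable1; try apply IHderivable2.
  - apply d_imp_neg; auto; try apply IHderivable.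
  - apply d_imp_pos; auto; try apply IHderivable1; try apply IHderivable2.
  - apply d_all_neg with (t := subst_term k u t); auto.
    specialize (IHderivable k u). simpl in IHderivable.
    rewrite subst_subst_form in IHderivable by lia. exact IHderivable.
  - apply d_all_pos; auto.
    specialize (IHderivable (S k) (lift_term 0 u)). simpl in IHderivable.
    unfold lift_seq in *. rewrite map_map in *. simpl in *.
    erewrite map_ext; [exact IHderivable|].
    intros [a b]; simpl. f_equal. symmetry. apply subst_lift_form. lia.
Qed.

Lemma unlift {R F P : Type} (G : sequent R F P) :
  derivable (lift_seq G) -> derivable G.
Proof.
  intro H. pose proof (subst_admissible H 0 (Var F 0)) as H'.
  unfold subst_seq, lift_seq in H'. rewrite map_map in H'. simpl in H'.
  erewrite map_ext in H'; [rewrite map_id in H'; exact H'|].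
  intros [a b]; simpl. rewrite subst_lift_same_form. reflexivity.
Qed.

Lemma weakening {R F P : Type} (D : sequent R F P) :
  derivable D -> forall E, derivable (D ++ E).
Proof.
  induction 1; intros E; simpl.
  - eapply d_perm; [apply Permutation_app_tail; eassumption|auto].
  - rewrite <- app_assoc. apply d_id; auto.
  - apply d_weaken; apply IHderivable.
  - apply d_neg; apply IHderivable.
  - apply d_and_neg_l; auto; apply IHderivable.
  - apply d_and_neg_r; auto; apply IHderivable.
  - apply d_and_pos; auto; [apply IHderivable1|apply IHderivable2].
  - apply d_imp_neg; auto; apply IHderivable.
  - rewrite <- app_assoc. apply d_imp_pos; auto. apply IHderivable2.
  - apply d_all_neg with (t := t); auto; apply IHderivable.
  - apply d_all_pos; auto. specialize (IHderivable (lift_seq E)).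
    unfold lift_seq in *. rewrite map_app. exact IHderivable.
Qed.

Definition rempt {R F P : Type} (X : iformula R F P) : Prop := forall r, ~ fst X r.

Lemma perm_cons_split {T : Type} (x : T) l E G :
  Permutation (x :: l) (E ++ G) ->
  (exists E', Permutation E (x :: E') /\ Permutation l (E' ++ G)) \/
  (exists G', Permutation G (x :: G') /\ Permutation l (E ++ G')).
Proof.
  intro H. assert (Hin : In x (E ++ G)) by (eapply Permutation_in; [exact H|left; auto]).
  apply in_app_or in Hin. destruct Hin as [Hin|Hin]; apply in_split in Hin;
    destruct Hin as (l1 & l2 & ->).
  - left. exists (l1 ++ l2). split.
    + apply Permutation_sym, Permutation_middle.
    + rewrite <- app_assoc in H. simpl in H.
      apply Permutation_cons_app_inv in H. rewrite app_assoc in H. exact H.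
  - right. exists (l1 ++ l2). split.
    + apply Permutation_sym, Permutation_middle.
    + rewrite app_assoc in H. apply Permutation_cons_app_inv in H.
      rewrite <- app_assoc in H. exact H.
Qed.

Lemma perm_app_split {T : Type} (l1 : list T) : forall l2 E G,
  Permutation (l1 ++ l2) (E ++ G) ->
  exists E1 E2 H1 H2, Permutation E (E1 ++ E2) /\ Permutation G (H1 ++ H2) /\
    Permutation l1 (E1 ++ H1) /\ Permutation l2 (E2 ++ H2).
Proof.
  induction l1 as [|x l1 IH]; intros l2 E G H.
  - exists [], E, [], G. simpl. repeat split; auto.
  - simpl in H. apply perm_cons_split in H.
    destruct H as [(E' & HE & Hl)|(G' & HG & Hl)].
    + destruct (IH _ _ _ Hl) as (E1 & E2 & H1 & H2 & a & b & c & d).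
      exists (x :: E1), E2, H1, H2. repeat split; auto.
      * rewrite HE, a. reflexivity.
      * simpl. apply perm_skip. auto.
    + destruct (IH _ _ _ Hl) as (E1 & E2 & H1 & H2 & a & b & c & d).
      exists E1, E2, (x :: H1), H2. repeat split; auto.
      * rewrite HG, b. reflexivity.
      * rewrite c. apply Permutation_middle.
Qed.

Lemma Forall_perm {T : Type} (Q : T -> Prop) l l' :
  Permutation l l' -> Forall Q l -> Forall Q l'.
Proof.
  intros Hp HF. rewrite Forall_forall in *. intros x Hx.
  apply HF. eapply Permutation_in; [apply Permutation_sym; exact Hp|exact Hx].
Qed.

Lemma FOP_remove {T : Type} (Rel : T -> T -> Prop) (l1 : list T) : forall x l2,
  ForallOrdPairs Rel (l1 ++ x :: l2) -> ForallOrdPairs Rel (l1 ++ l2).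
Proof.
  induction l1 as [|a l1 IH]; intros x l2 H; simpl in *.
  - inversion H; auto.
  - inversion H; subst. constructor; eauto.
    rewrite Forall_forall in *. intros y Hy. apply H2.
    apply in_app_or in Hy. apply in_or_app. simpl. tauto.
Qed.

Definition Good {R F P : Type} (p : P) (ts : list (term F)) (L : sequent R F P) : Prop :=
  exists Rs G0, Rs <> [] /\ ForallOrdPairs (@rdisjoint R) Rs /\
    (forall r, exists R0, In R0 Rs /\ R0 r) /\
    Permutation L (map (fun R0 => (R0, @Atom R F P p ts)) Rs ++ G0).

Lemma good_remove {R F P : Type} (Hne : inhabited R) p ts (X : iformula R F P) L :
  Good p ts (X :: L) -> rempt X -> Good p ts L.
Proof.
  intros (Rs & G0 & Hn & Hd & Hc & Hp) HX.
  assert (Hin : In X (map (fun R0 => (R0, @Atom R F P p ts)) Rs ++ G0))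
    by (eapply Permutation_in; [exact Hp|left; auto]).
  apply in_app_or in Hin. destruct Hin as [Hin|Hin].
  - apply in_map_iff in Hin. destruct Hin as (R1 & <- & HR1).
    apply in_split in HR1. destruct HR1 as (l1 & l2 & ->).
    assert (Hc' : forall r, exists R0, In R0 (l1 ++ l2) /\ R0 r).
    { intros r. destruct (Hc r) as (R0 & HR0 & Hr).
      exists R0. split; auto. apply in_app_or in HR0. destruct HR0 as [?|[<-|?]];
      apply in_or_app; auto. exfalso. exact (HX r Hr). }
    exists (l1 ++ l2), G0. repeat split; auto.
    + destruct Hne as [r]. destruct (Hc' r) as (R0 & HR0 & _).
      intro E. rewrite E in HR0. destruct HR0.
    + eapply FOP_remove; eauto.
    + rewrite map_app in *. simpl in Hp. rewrite <- app_assoc in Hp. simpl in Hp.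
      apply Permutation_cons_app_inv in Hp. rewrite <- app_assoc. exact Hp.
  - apply in_split in Hin. destruct Hin as (l1 & l2 & ->).
    exists Rs, (l1 ++ l2). repeat split; auto.
    rewrite app_assoc in Hp. apply Permutation_cons_app_inv in Hp.
    rewrite <- app_assoc in Hp. exact Hp.
Qed.

Lemma good_remove_all {R F P : Type} (Hne : inhabited R) p ts (E : sequent R F P) :
  forall L, Good p ts (E ++ L) -> Forall rempt E -> Good p ts L.
Proof.
  induction E as [|X E IH]; intros L H HF; simpl in *; auto.
  inversion HF; subst. apply IH; auto. eapply good_remove; eauto.
Qed.

Lemma cut_main {R F P : Type} (Hne : inhabited R) (D : sequent R F P) :
  derivable D -> forall E G, Permutation D (E ++ G) -> Forall rempt E -> derivable G.
Proof.
  induction 1; intros E0 G0 Hp HE.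
  - apply (IHderivable E0 G0); auto. eapply Permutation_trans; eauto.
  - assert (Hg : Good p ts G0).
    { eapply good_remove_all; eauto. exists Rs, G. repeat split; auto.
      apply Permutation_sym; auto. }
    destruct Hg as (Rs' & G' & Hn & Hd & Hc & Hp').
    eapply d_perm; [apply Permutation_sym; exact Hp'|]. apply d_id; auto.
  - apply perm_cons_split in Hp. destruct Hp as [(E' & HE' & Hl)|(G' & HG & Hl)].
    + apply (Forall_perm HE') in HE. inversion HE; subst.
      apply (IHderivable ((R0, A) :: (R0, A) :: E')).
      * simpl. do 2 apply perm_skip. auto.
      * repeat constructor; auto.
    + eapply d_perm; [apply Permutation_sym; exact HG|]. apply d_weaken.
      apply (IHderivable E0).
      * rewrite Hl. rewrite <- !Permutation_middle. reflexivity.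
      * auto.
  - apply perm_cons_split in Hp. destruct Hp as [(E' & HE' & Hl)|(G' & HG & Hl)].
    + apply (Forall_perm HE') in HE. inversion HE; subst.
      apply (IHderivable ((preim f R0, A) :: E')).
      * simpl. apply perm_skip. auto.
      * constructor; auto. intros r Hr. exact (H2 (f r) Hr).
    + eapply d_perm; [apply Permutation_sym; exact HG|]. apply d_neg.
      apply (IHderivable E0).
      * rewrite Hl. rewrite <- !Permutation_middle. reflexivity.
      * auto.
  - apply perm_cons_split in Hp. destruct Hp as [(E' & HE' & Hl)|(G' & HG & Hl)].
    + apply (Forall_perm HE') in HE. inversion HE; subst.
      apply (IHderivable ((R0, A) :: E')).
      * simpl. apply perm_skip. auto.
      * constructor; auto.
    + eapply d_perm; [apply Permutation_sym; exact HG|]. apply d_and_neg_l; auto.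
      apply (IHderivable E0).
      * rewrite Hl. rewrite <- !Permutation_middle. reflexivity.
      * auto.
  - apply perm_cons_split in Hp. destruct Hp as [(E' & HE' & Hl)|(G' & HG & Hl)].
    + apply (Forall_perm HE') in HE. inversion HE; subst.
      apply (IHderivable ((R0, B) :: E')).
      * simpl. apply perm_skip. auto.
      * constructor; auto.
    + eapply d_perm; [apply Permutation_sym; exact HG|]. apply d_and_neg_r; auto.
      apply (IHderivable E0).
      * rewrite Hl. rewrite <- !Permutation_middle. reflexivity.
      * auto.
  - apply perm_cons_split in Hp. destruct Hp as [(E' & HE' & Hl)|(G' & HG & Hl)].
    + apply (Forall_perm HE') in HE. inversion HE; subst.
      apply (IHderivable1 ((R0, A) :: E')).
      * simpl. apply perm_skip. auto.
      * constructor; auto.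
    + eapply d_perm; [apply Permutation_sym; exact HG|]. apply d_and_pos; auto.
      * apply (IHderivable1 E0); auto.
        rewrite Hl. rewrite <- !Permutation_middle. reflexivity.
      * apply (IHderivable2 E0); auto.
        rewrite Hl. rewrite <- !Permutation_middle. reflexivity.
  - apply perm_cons_split in Hp. destruct Hp as [(E' & HE' & Hl)|(G' & HG & Hl)].
    + apply (Forall_perm HE') in HE. inversion HE; subst.
      apply (IHderivable ((preim f R0, A) :: (R0, B) :: E')).
      * simpl. do 2 apply perm_skip. auto.
      * constructor; [|constructor]; auto. intros r Hr. exact (H3 (f r) Hr).
    + eapply d_perm; [apply Permutation_sym; exact HG|]. apply d_imp_neg; auto.
      apply (IHderivable E0).
      * rewrite Hl. rewrite <- !Permutation_middle. reflexivity.
      * auto.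
  - apply perm_cons_split in Hp. destruct Hp as [(E' & HE' & Hl)|(G' & HG & Hl)].
    + apply (Forall_perm HE') in HE. inversion HE; subst.
      destruct (perm_app_split _ _ _ _ Hl) as (E1 & E2 & K1 & K2 & a & b & c & d).
      apply (Forall_perm a) in H5.
      apply Forall_app in H5. destruct H5 as [HF1 HF2].
      eapply d_perm; [apply Permutation_sym; exact b|]. apply weakening.
      apply (IHderivable1 ((preim f R0, A) :: E1)).
      * simpl. apply perm_skip. auto.
      * constructor; auto. intros r Hr. exact (H4 (f r) Hr).
    + destruct (perm_app_split _ _ _ _ Hl) as (E1 & E2 & K1 & K2 & a & b & c & d).
      apply (Forall_perm a) in HE.
      apply Forall_app in HE. destruct HE as [HF1 HF2].
      eapply d_perm; [apply Permutation_sym; exact HG|].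
      eapply d_perm; [apply perm_skip; apply Permutation_sym; exact b|].
      apply d_imp_pos; auto.
      * apply (IHderivable1 E1); auto.
        rewrite c. rewrite <- !Permutation_middle. reflexivity.
      * apply (IHderivable2 E2); auto.
        rewrite d. rewrite <- !Permutation_middle. reflexivity.
  - apply perm_cons_split in Hp. destruct Hp as [(E' & HE' & Hl)|(G' & HG & Hl)].
    + apply (Forall_perm HE') in HE. inversion HE; subst.
      apply (IHderivable ((R0, subst_form 0 t A) :: E')).
      * simpl. apply perm_skip. auto.
      * constructor; auto.
    + eapply d_perm; [apply Permutation_sym; exact HG|]. apply d_all_neg with (t := t); auto.
      apply (IHderivable E0).
      * rewrite Hl. rewrite <- !Permutation_middle. reflexivity.
      * auto.
  - apply perm_cons_split in Hp. destruct Hp as [(E' & HE' & Hl)|(G' & HG & Hl)].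
    + apply (Forall_perm HE') in HE. inversion HE; subst.
      apply unlift.
      apply (IHderivable ((R0, A) :: lift_seq E')).
      * simpl. apply perm_skip. unfold lift_seq. rewrite <- map_app.
        apply Permutation_map. auto.
      * constructor; auto. unfold lift_seq. rewrite Forall_map.
        eapply Forall_impl; [|exact H4]. intros [a b] Hab. exact Hab.
    + eapply d_perm; [apply Permutation_sym; exact HG|]. apply d_all_pos; auto.
      apply (IHderivable (lift_seq E0)).
      * rewrite <- Permutation_middle. apply perm_skip. unfold lift_seq.
        rewrite <- map_app. apply Permutation_map. auto.
      * unfold lift_seq. rewrite Forall_map.
        eapply Forall_impl; [|exact HE]. intros [a b] Hab. exact Hab.
Qed.

Theorem mainTheorem3 (Role : Type) (Fsym Psym : Type) (Hne : inhabited Role)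
  (G : sequent Role Fsym Psym) (A : formula Role Fsym Psym) :
  derivable (G ++ [(@rempty Role, A)]) -> derivable G.
Proof.
  intro H. apply (@cut_main _ _ _ Hne _ H [(@rempty Role, A)] G).
  - apply Permutation_app_comm.
  - constructor; [|constructor]. intros r Hr. exact Hr.
Qed.
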